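(* Let $S$ be a finite $p$-group and $\mathcal{A}$ a bifree $S$-algebra. Then $\mathcal{A}$ possesses an $(S,S)$-invariant $\mathcal{O}$-basis contained in $\mathcal{A}^\times$ if and only if for every subgroup $P\le S$ and every $\varphi\in\mathrm{Hom}_{\mathfrak{F}_S(\mathcal{A})}(P,S)$ we have $\mathcal{A}^\times\cap{}^\varphi\mathcal{A}^P\neq\emptyset$.
   Context: $\mathcal{O}$ is a complete local noetherian domain with maximal ideal $\mathfrak{m}$ and algebraically closed (hence infinite) residue field $k$ of characteristic $p$ (possibly $\mathcal{O}=k$). An interior $S$-algebra is an $\mathcal{O}$-free finite-rank $\mathcal{O}$-algebra $\mathcal{A}$ with a group homomorphism $S\to\mathcal{A}^\times$; $S\times S$ acts by $(s,t)a=sat^{-1}$. It is bifree if it has an $\mathcal{O}$-basis $Y$ with $sY=Y=Ys$ for all $s\in S$ (an $(S,S)$-invariant basis) on which the left and right $S$-actions are free. ${}^\varphi\mathcal{A}^P=\{a:\varphi(p)a=ap\ \forall p\in P\}$. For $U\le S\times S$, $\mathcal{A}(U)=\mathcal{A}^U/(\mathfrak{m}\mathcal{A}^U+\sum_{V<U}\mathrm{tr}_V^U\mathcal{A}^V)$; for injective $\varphi:P\to S$, $\mathcal{A}(\varphi)=\mathcal{A}(\Delta(\varphi,P))$ with $\Delta(\varphi,P)=\{(\varphi(p),p)\}$. $\mathfrak{F}_S(\mathcal{A})$ has objects the subgroups of $S$ and $\mathrm{Hom}(P,Q)=\{\varphi:P\to Q$ injective homomorphism$:\mathcal{A}(\varphi)\ne0\}$.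 *)

(* Defs.v *)
From HB Require Import structures.
From mathcomp Require Import all_boot all_order all_algebra all_fingroup all_solvable.
Set Implicit Arguments. Unset Strict Implicit. Unset Printing Implicit Defensive.
Import GRing.Theory.
Local Open Scope ring_scope.

(* membership in the maximal ideal m of a local ring: the non-units *)
Definition mideal (O : idomainType) (x : O) : Prop := x \isn't a GRing.unit.

Definition is_local (O : idomainType) : Prop :=
  forall x y : O, mideal x -> mideal y -> mideal (x + y).

Definition is_ideal (O : idomainType) (I : O -> Prop) : Prop :=
  [/\ I 0, (forall x y, I x -> I y -> I (x + y)) & (forall a x, I x -> I (a * x))].

Definition fin_gen_ideal (O : idomainType) (I : O -> Prop) : Prop :=
  exists s : seq O, (forall x, x \in s -> I x) /\
    (forall x, I x -> exists c : 'I_(size s) -> O, x = \sum_(j < size s) c j * s`_j).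

Definition noetherian (O : idomainType) : Prop :=
  forall I : O -> Prop, is_ideal I -> fin_gen_ideal I.

Fixpoint mpow (O : idomainType) (n : nat) (x : O) : Prop :=
  match n with
  | 0 => True
  | n'.+1 => exists s : seq (O * O),
      (forall q, q \in s -> mideal q.1 /\ mpow n' q.2) /\ x = \sum_(q <- s) q.1 * q.2
  end.

Definition m_complete (O : idomainType) : Prop :=
  forall u : nat -> O,
    (forall k, exists N, forall n m, (N <= n)%N -> (N <= m)%N -> mpow k (u n - u m)) ->
    exists l : O, forall k, exists N, forall n, (N <= n)%N -> mpow k (l - u n).

(* the residue field k = O/m has characteristic p *)
Definition residue_char (O : idomainType) (p : nat) : Prop :=
  prime p /\ mideal (p%:R : O).

(* the residue field k = O/m is algebraically closed: every polynomial over k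
   of positive degree (lifted to O with unit leading coefficient) has a root *)
Definition residue_alg_closed (O : idomainType) : Prop :=
  forall f : {poly O}, (1 < size f)%N -> lead_coef f \is a GRing.unit ->
    exists a : O, mideal f.[a].

Section Interior.
Variables (O : idomainType) (A : algType O) (gT : finGroupType).

Definition is_unitA (a : A) : Prop := exists b : A, a * b = 1 /\ b * a = 1.

Definition interior (S : {set gT}) (i : gT -> A) : Prop :=
  i 1%g = 1 /\ {in S &, forall x y, i (x * y)%g = i x * i y}.

Definition actA (i : gT -> A) (u : gT * gT) (a : A) : A :=
  i u.1 * a * i (u.2^-1)%g.

Definition is_basis (Y : seq A) : Prop :=
  (forall c : 'I_(size Y) -> O, \sum_(j < size Y) c j *: Y`_j = 0 -> forall j, c j = 0) /\
  (forall a : A, exists c : 'I_(size Y) -> O, a = \sum_(j < size Y) c j *: Y`_j).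

Definition inv_basis (S : {set gT}) (i : gT -> A) (Y : seq A) : Prop :=
  forall s, s \in S ->
    [seq i s * y | y <- Y] =i Y /\ [seq y * i s | y <- Y] =i Y.

Definition bifree (S : {set gT}) (i : gT -> A) : Prop :=
  exists Y : seq A, [/\ is_basis Y, inv_basis S i Y &
    forall s y, s \in S -> y \in Y -> (i s * y = y -> s = 1%g) /\ (y * i s = y -> s = 1%g)].

Definition fixedU (i : gT -> A) (U : {set gT * gT}) (a : A) : Prop :=
  forall u, u \in U -> actA i u a = a.

Definition trA (i : gT -> A) (U V : {set gT * gT}) (a : A) : A :=
  \sum_(C in lcosets V U) actA i (repr C) a.

Definition in_bq_kernel (i : gT -> A) (U : {set gT * gT}) (b : A) : Prop :=
  exists (s : seq (O * A)) (c : {group gT * gT} -> A),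
    [/\ (forall q, q \in s -> mideal q.1 /\ fixedU i U q.2),
        (forall V : {group gT * gT}, V \proper U -> fixedU i V (c V)) &
        b = \sum_(q <- s) q.1 *: q.2
            + \sum_(V : {group gT * gT} | V \proper U) trA i U V (c V)].

Definition brauer_nonzero (i : gT -> A) (U : {set gT * gT}) : Prop :=
  exists a : A, fixedU i U a /\ ~ in_bq_kernel i U a.

Definition Delta (phi : gT -> gT) (P : {set gT}) : {set gT * gT} :=
  [set (phi x, x) | x in P].

Definition inj_hom (P Q : {set gT}) (phi : gT -> gT) : Prop :=
  [/\ {in P &, forall x y, phi (x * y)%g = (phi x * phi y)%g},
      {in P &, injective phi} & forall x, x \in P -> phi x \in Q].

Definition FHom (i : gT -> A) (P Q : {set gT}) (phi : gT -> gT) : Prop :=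
  inj_hom P Q phi /\ brauer_nonzero i (Delta phi P).

Definition twisted_fixed (i : gT -> A) (P : {set gT}) (phi : gT -> gT) (a : A) : Prop :=
  forall x, x \in P -> i (phi x) * a = a * i x.

End Interior.

(* Main.v *)
Require Import Defs.
From HB Require Import structures.
From mathcomp Require Import all_boot all_order all_algebra all_fingroup all_solvable.
From mathcomp Require Import zify ring lra.
From Stdlib Require Import ClassicalEpsilon.
Set Implicit Arguments. Unset Strict Implicit. Unset Printing Implicit Defensive.
Import GRing.Theory.
Local Open Scope ring_scope.

Section Local.
Variables (O : idomainType) (O_local : is_local O).

Lemma mideal_mul (a x : O) : mideal x -> mideal (a * x).
Proof. by rewrite /mideal unitrM => /negbTE->; rewrite andbF. Qed.

Lemma mideal_mulr (a x : O) : mideal x -> mideal (x * a).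
Proof. by rewrite mulrC; apply: mideal_mul. Qed.

Lemma mideal0 : mideal (0 : O).
Proof. by rewrite /mideal unitr0. Qed.

Lemma mideal1 : ~ mideal (1 : O).
Proof. by rewrite /mideal unitr1. Qed.

Lemma mideal_opp (x : O) : mideal x -> mideal (- x).
Proof. by rewrite /mideal unitrN. Qed.

Lemma mideal_add (x y : O) : mideal x -> mideal y -> mideal (x + y).
Proof. exact: O_local. Qed.

Lemma mideal_sub (x y : O) : mideal x -> mideal y -> mideal (x - y).
Proof. by move=> hx hy; apply: mideal_add => //; apply: mideal_opp. Qed.

Lemma mideal_big (I : Type) (r : seq I) (P : pred I) (F : I -> O) :
  (forall j, P j -> mideal (F j)) -> mideal (\sum_(j <- r | P j) F j).
Proof.
move=> h; elim: r => [|x r IH]; first by rewrite big_nil; apply: mideal0.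
rewrite big_cons; case: ifP => Px //; exact: mideal_add (h _ Px) IH.
Qed.

Lemma unit_addm (x y : O) : x \is a GRing.unit -> mideal y -> (x + y) \is a GRing.unit.
Proof.
move=> ux my; apply/negP => /negP h.
have : mideal ((x + y) - y) by apply: mideal_sub.
by rewrite addrK /mideal ux.
Qed.

Fixpoint good_list (L : seq O) : Prop :=
  if L is a :: L' then (forall x, x \in L' -> (a - x) \is a GRing.unit) /\ good_list L'
  else True.

Lemma vanish (L : seq O) : good_list L -> forall f : {poly O},
  (size f <= size L)%N -> (forall x, x \in L -> mideal f.[x]) -> forall b, mideal f.[b].
Proof.
elim: L => [|a L IH] /= => [_ f|[ha gL] f] hs hv b.
  by move: hs; rewrite leqn0 size_poly_eq0 => /eqP->; rewrite horner0; apply: mideal0.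
have /factor_theorem [q hq] : root (f - f.[a]%:P) a by rewrite /root !hornerE subrr.
have fE : f = q * ('X - a%:P) + f.[a]%:P by rewrite -hq subrK.
have ma : mideal f.[a] by apply: hv; rewrite inE eqxx.
have hq' : forall x, x \in L -> mideal q.[x].
  move=> x xL.
  have : mideal (f.[x] - f.[a]) by apply: mideal_sub => //; apply: hv; rewrite inE xL orbT.
  rewrite {1}fE !hornerE addrK.
  move=> h; rewrite /mideal; apply/negP => uq; move: h; rewrite /mideal unitrM uq /=.
  by rewrite -opprB unitrN ha.
have sq : (size q <= size L)%N.
  have [->|qn0] := eqVneq q 0; first by rewrite size_poly0.
  have : (size (q * ('X - a%:P))%R <= maxn (size f) 1)%N.
    rewrite -hq; apply: leq_trans (size_polyD _ _) _.
    by rewrite size_polyN size_polyC geq_max leq_maxl leq_max leq_b1 orbT.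
  have e : size (q * ('X - a%:P)) = (size q).+1.
    by rewrite size_mul ?polyXsubC_eq0 // size_XsubC addn2.
  rewrite e leq_max => /orP[h1|h1]; first by rewrite -ltnS (leq_trans h1 hs).
  by move: h1; rewrite ltnS leqn0 => /eqP->.
rewrite fE !hornerE; apply: mideal_add => //.
apply: mideal_mulr; exact: IH gL q sq hq' b.
Qed.


Lemma good_list_filter (P : pred O) L : good_list L -> good_list (filter P L).
Proof.
elim: L => //= a L IH [ha gL]; case: ifP => _ /=; last exact: IH.
by split; [move=> x; rewrite mem_filter => /andP[_]; apply: ha | exact: IH].
Qed.

Lemma prod_unit_each (a : O) (L : seq O) :
  (\prod_(x <- L) (a - x)) \is a GRing.unit -> forall x, x \in L -> (a - x) \is a GRing.unit.
Proof.
elim: L => [|y L IH] //; rewrite big_cons unitrM => /andP[uy uL] x.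
by rewrite inE => /orP[/eqP->//|]; apply: IH.
Qed.

Variable k_closed : residue_alg_closed O.

Lemma fresh (L : seq O) : exists a, forall x, x \in L -> (a - x) \is a GRing.unit.
Proof.
case: L => [|x0 L0]; first by exists 0.
set L := x0 :: L0.
pose f := \prod_(x <- L) ('X - x%:P) + 1.
have s1 : (size (1%R : {poly O}) < size (\prod_(x <- L) ('X - x%:P))%R)%N.
  by rewrite size_poly1 size_prod_XsubC.
have h1 : (1 < size f)%N by rewrite size_polyDl // size_prod_XsubC.
have h2 : lead_coef f \is a GRing.unit.
  by rewrite lead_coefDl // (monicP (monic_prod_XsubC _ _ _)) unitr1.
have [a ha] := k_closed h1 h2.
exists a.
have up : (\prod_(x <- L) (a - x)) \is a GRing.unit.
  apply/negPn/negP => h.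
  have : mideal ((\prod_(x <- L) (a - x) + 1) - \prod_(x <- L) (a - x)).
    apply: mideal_sub => //.
    by move: ha; rewrite /f hornerD horner_prod hornerC; under eq_bigr do rewrite hornerXsubC.
  by rewrite addrC addKr; apply: mideal1.
exact: prod_unit_each up.
Qed.

Lemma good_list_ex (N : nat) : exists L, size L = N /\ good_list L.
Proof.
elim: N => [|N [L [sL gL]]]; first by exists [::].
have [a ha] := fresh L; exists (a :: L); split; [by rewrite /= sL | by split].
Qed.

Lemma choose_good (fs : seq {poly O}) :
  (forall f, f \in fs -> exists a, f.[a] \is a GRing.unit) ->
  exists l, forall f, f \in fs -> f.[l] \is a GRing.unit.
Proof.
move=> hfs.
pose bad (f : {poly O}) := [pred x | f.[x] \isn't a GRing.unit].
have [L [sL gL]] := good_list_ex (\sum_(f <- fs) size f).+1.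
have cb : forall f, f \in fs -> (count (bad f) L <= size f)%N.
  move=> f ffs; rewrite leqNgt; apply/negP => hc.
  have [a ua] := hfs f ffs.
  have := vanish (good_list_filter (bad f) gL) (f := f).
  rewrite size_filter => /(_ (ltnW hc)) h.
  have : mideal f.[a] by apply: h => x; rewrite mem_filter => /andP[].
  by rewrite /mideal ua.
pose allbad := [pred x | has (fun f => bad f x) fs].
have : (count allbad L <= \sum_(f <- fs) count (bad f) L)%N.
  rewrite /allbad; elim: (fs) => [|f gs IH] /=.
    by rewrite big_nil count_pred0.
  rewrite big_cons; apply: leq_trans _ (leq_add (leqnn _) IH).
  rewrite -count_predUI; apply: leq_trans (leq_addr _ _).
  by apply: sub_count => x.
have : (\sum_(f <- fs) count (bad f) L <= \sum_(f <- fs) size f)%N.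
  rewrite big_seq_cond [X in (_ <= X)%N]big_seq_cond; apply: leq_sum => f.
  by rewrite andbT; apply: cb.
move=> h1 h2.
have : (count allbad L < size L)%N by rewrite sL ltnS (leq_trans h2 h1).
move=> h; have : (0 < count (predC allbad) L)%N.
  rewrite lt0n; apply/eqP => h0; move: (count_predC allbad L).
  by rewrite h0 addn0 => e; rewrite e ltnn in h.
rewrite -has_count => /hasP [l _ hl]; exists l => f ffs.
apply/negPn/negP => hb; move/negP: hl; apply; apply/hasP; exists f => //.
Qed.

End Local.

Definition basisN (O : idomainType) (A : algType O) (n : nat) (e : 'I_n -> A) : Prop :=
  (forall c : 'I_n -> O, \sum_(j < n) c j *: e j = 0 -> forall j, c j = 0) /\
  (forall a : A, exists c : 'I_n -> O, a = \sum_(j < n) c j *: e j).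

Lemma is_basis_of (O : idomainType) (A : algType O) (Z : seq A) n :
  size Z = n -> basisN (fun j : 'I_n => Z`_j) -> is_basis Z.
Proof. by move=> e; case: n / e. Qed.

Lemma basisN_eq (O : idomainType) (A : algType O) n (e e' : 'I_n -> A) :
  e =1 e' -> basisN e -> basisN e'.
Proof.
move=> ee [h1 h2]; split.
  by move=> c hc; apply: h1; rewrite -[RHS]hc; apply: eq_bigr => j _; rewrite ee.
by move=> a; have [c hc] := h2 a; exists c; rewrite hc; apply: eq_bigr => j _; rewrite ee.
Qed.

Section Basis.
Variables (O : idomainType) (A : algType O) (n : nat) (e : 'I_n -> A) (he : basisN e).

Lemma coef_ex (a : A) : exists f : {ffun 'I_n -> O}, a == \sum_(j < n) f j *: e j.
Proof. by have [c hc] := he.2 a; exists (finfun c); apply/eqP; rewrite hc; apply: eq_bigr => j _; rewrite ffunE. Qed.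

Definition coef (a : A) : 'I_n -> O := xchoose (coef_ex a).

Lemma coefE (a : A) : a = \sum_(j < n) coef a j *: e j.
Proof. exact/eqP/(xchooseP (coef_ex a)). Qed.

Lemma lin_uniq (c d : 'I_n -> O) :
  \sum_(j < n) c j *: e j = \sum_(j < n) d j *: e j -> forall j, c j = d j.
Proof.
move=> h j; apply/eqP; rewrite -subr_eq0; apply/eqP; move: j; apply: he.1.
by under eq_bigr do rewrite scalerBl; rewrite sumrB h subrr.
Qed.

Lemma coef_uniq (a : A) (c : 'I_n -> O) : a = \sum_(j < n) c j *: e j -> forall j, coef a j = c j.
Proof. by move=> h; apply: lin_uniq; rewrite -coefE. Qed.

Lemma coef_e (k j : 'I_n) : coef (e k) j = (k == j)%:R.
Proof.
apply: (coef_uniq (c := fun j => (k == j)%:R)); rewrite (bigD1 k) //= eqxx scale1r big1 ?addr0 // => l /negbTE.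
by rewrite eq_sym => ->; rewrite scale0r.
Qed.

Lemma coefD (a b : A) j : coef (a + b) j = coef a j + coef b j.
Proof.
apply: (coef_uniq (c := fun j => coef a j + coef b j)); rewrite {1}(coefE a) {1}(coefE b) -big_split /=.
by apply: eq_bigr => l _; rewrite scalerDl.
Qed.

Lemma coefZ (x : O) (a : A) j : coef (x *: a) j = x * coef a j.
Proof.
apply: (coef_uniq (c := fun j => x * coef a j)); rewrite {1}(coefE a) scaler_sumr.
by apply: eq_bigr => l _; rewrite scalerA.
Qed.

Lemma coef_sum (I : Type) (r : seq I) (P : pred I) (F : I -> A) j :
  coef (\sum_(x <- r | P x) F x) j = \sum_(x <- r | P x) coef (F x) j.
Proof.
elim: r => [|x r IH]; first by rewrite !big_nil; apply: (coef_uniq (c := fun _ => 0)); rewrite big1 // => l _; rewrite scale0r.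
by rewrite !big_cons; case: (P x); rewrite ?coefD IH.
Qed.

Definition rep (x : A) (M : 'M[O]_n) := forall j, x * e j = \sum_(k < n) M j k *: e k.

Definition mat (x : A) : 'M[O]_n := \matrix_(j, k) coef (x * e j) k.

Lemma rep_mat x : rep x (mat x).
Proof. by move=> j; rewrite {1}(coefE (x * e j)); apply: eq_bigr => k _; rewrite mxE. Qed.

Lemma comb_rep (g : 'I_n -> A) (B : 'M[O]_n) (c : 'I_n -> O) :
  (forall j, g j = \sum_(k < n) B j k *: e k) ->
  \sum_(j < n) c j *: g j = \sum_(k < n) ((\row_j c j) *m B) 0 k *: e k.
Proof.
move=> hg; under eq_bigr do rewrite hg scaler_sumr.
rewrite exchange_big /=; apply: eq_bigr => k _.
rewrite !mxE scaler_suml; apply: eq_bigr => j _; by rewrite mxE scalerA.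
Qed.

Lemma basis_change (g : 'I_n -> A) (B : 'M[O]_n) :
  (forall j, g j = \sum_(k < n) B j k *: e k) -> \det B \is a GRing.unit -> basisN g.
Proof.
move=> hg uB; have uB' : B \in unitmx by rewrite unitmxE.
split.
  move=> c hc j.
  have h0 : forall k, ((\row_j c j) *m B) 0 k = (0 : 'rV[O]_n) 0 k.
    apply: lin_uniq; rewrite -(comb_rep c hg) hc; apply/esym/big1 => k _; by rewrite mxE scale0r.
  have : (\row_j c j) *m B = 0 by apply/matrixP => a b; rewrite (ord1 a) h0.
  move=> /(congr1 (mulmx^~ (invmx B))); rewrite mulmxK // mul0mx => /matrixP /(_ 0 j).
  by rewrite !mxE.
move=> a; exists (fun j => ((\row_k coef a k) *m invmx B) 0 j).
rewrite (comb_rep _ hg) {1}(coefE a); apply: eq_bigr => k _.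
have -> : (\row_j ((\row_k coef a k) *m invmx B) 0 j) = (\row_k coef a k) *m invmx B.
  by apply/matrixP => x y; rewrite (ord1 x) mxE.
by rewrite mulmxKV // mxE.
Qed.

Lemma rep_mul (x : A) (M : 'M[O]_n) (c : 'I_n -> O) : rep x M ->
  x * (\sum_(j < n) c j *: e j) = \sum_(k < n) ((\row_j c j) *m M) 0 k *: e k.
Proof.
move=> hx; rewrite mulr_sumr; under eq_bigr do rewrite -scalerAr.
exact: comb_rep.
Qed.

Lemma rep_comp (x y : A) (M N : 'M[O]_n) : rep x M -> rep y N -> rep (x * y) (N *m M).
Proof.
move=> hx hy j; rewrite -mulrA hy (rep_mul (fun k => N j k) hx); apply: eq_bigr => k _; congr (_ *: _).
by rewrite !mxE; apply: eq_bigr => l _; rewrite !mxE.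
Qed.

Lemma rep_uniq (x : A) (M N : 'M[O]_n) : rep x M -> rep x N -> M = N.
Proof.
move=> hM hN; apply/matrixP => j k; apply: lin_uniq k; by rewrite -hM -hN.
Qed.

Lemma rep1 : rep 1 1%:M.
Proof.
move=> j; rewrite mul1r (bigD1 j) //= mxE eqxx scale1r big1 ?addr0 // => l /negbTE.
by rewrite mxE eq_sym => ->; rewrite scale0r.
Qed.

Lemma rep_unit (x : A) (M : 'M[O]_n) : rep x M -> \det M \is a GRing.unit -> is_unitA x.
Proof.
move=> hx uM; have uM' : M \in unitmx by rewrite unitmxE.
pose b := \sum_(j < n) ((\row_k coef 1 k) *m invmx M) 0 j *: e j.
have xb : x * b = 1.
  rewrite (rep_mul _ hx) {2}(coefE 1); apply: eq_bigr => k _.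
  have -> : (\row_j ((\row_k coef 1 k) *m invmx M) 0 j) = (\row_k coef 1 k) *m invmx M.
    by apply/matrixP => u v; rewrite (ord1 u) mxE.
  by rewrite mulmxKV // mxE.
have hb := rep_mat b.
have h1 : mat b *m M = 1%:M by apply: rep_uniq (rep_comp hx hb) _; rewrite xb; apply: rep1.
have h2 : rep (b * x) 1%:M by rewrite -(mulmx1C h1); apply: rep_comp.
exists b; split => //.
transitivity (b * x * \sum_(j < n) coef 1 j *: e j); first by rewrite -coefE mulr1.
rewrite [RHS](coefE 1) mulr_sumr; apply: eq_bigr => j _; rewrite -scalerAr h2.
congr (_ *: _); rewrite (bigD1 j) //= mxE eqxx scale1r big1 ?addr0 // => l /negbTE.
by rewrite mxE eq_sym => ->; rewrite scale0r.
Qed.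

Lemma unit_rep (x : A) : is_unitA x -> \det (mat x) \is a GRing.unit.
Proof.
move=> [y [xy yx]].
have h : mat x *m mat y = 1%:M.
  by apply: rep_uniq (rep_comp (rep_mat y) (rep_mat x)) _; rewrite yx; apply: rep1.
by apply/unitrP; exists (\det (mat y)); rewrite -det_mulmx mulmx1C // -det_mulmx h det1.
Qed.

Lemma rep_lin (x1 x2 : A) (M1 M2 : 'M[O]_n) (l : O) : rep x1 M1 -> rep x2 M2 ->
  rep (x1 + l *: (x2 - x1)) (M1 + l *: (M2 - M1)).
Proof.
move=> h1 h2 j; rewrite mulrDl -scalerAl mulrBl h1 h2 -sumrB scaler_sumr -big_split /=.
by apply: eq_bigr => k _; rewrite !mxE scalerDl -scalerBl scalerA.
Qed.

End Basis.

Lemma pdet_eval (O : idomainType) n (B0 B1 : 'M[O]_n) (l : O) :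
  (\det (map_mx polyC B0 + 'X *: map_mx polyC B1)).[l] = \det (B0 + l *: B1).
Proof.
set M := (map_mx polyC B0 + 'X *: map_mx polyC B1).
have -> : (\det M).[l] = horner_eval l (\det M) by rewrite horner_evalE.
rewrite -det_map_mx; congr (\det _); apply/matrixP => j k.
by rewrite !mxE; rewrite rmorphD rmorphM /= !horner_evalE !hornerE.
Qed.

Section Act.
Variables (O : idomainType) (A : algType O) (gT : finGroupType) (S : {group gT}).
Variables (i : gT -> A) (hi : interior S i).

Local Notation SS := (setX S S).

Lemma i1 : i 1%g = 1. Proof. by case: hi. Qed.
Lemma iM s t : s \in S -> t \in S -> i (s * t)%g = i s * i t.
Proof. by case: hi => _ h; apply: h. Qed.
Lemma iVl s : s \in S -> i s^-1%g * i s = 1.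
Proof. by move=> sS; rewrite -iM ?groupV // mulVg i1. Qed.
Lemma iVr s : s \in S -> i s * i s^-1%g = 1.
Proof. by move=> sS; rewrite -iM ?groupV // mulgV i1. Qed.

Lemma unitA_mul (a b : A) : is_unitA a -> is_unitA b -> is_unitA (a * b).
Proof.
move=> [a' [h1 h2]] [b' [h3 h4]]; exists (b' * a'); split.
  by rewrite mulrA -(mulrA a) h3 mulr1 h1.
by rewrite mulrA -(mulrA b') h2 mulr1 h4.
Qed.

Lemma unitA_i s : s \in S -> is_unitA (i s).
Proof. by move=> sS; exists (i s^-1%g); rewrite iVl // iVr. Qed.

Lemma inSS (u : gT * gT) : (u \in SS) = (u.1 \in S) && (u.2 \in S).
Proof. by case: u => a b; rewrite in_setX. Qed.

Lemma SS_group : group_set SS.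
Proof.
apply/group_setP; split; first by rewrite inSS !group1.
by move=> [a b] [c d]; rewrite !inSS /= => /andP[aS bS] /andP[cS dS]; rewrite !groupM.
Qed.

Lemma actA_unit u a : u \in SS -> is_unitA a -> is_unitA (actA i u a).
Proof.
rewrite inSS => /andP[h1 h2] ua; rewrite /actA.
by apply: unitA_mul; [apply: unitA_mul => //|]; apply: unitA_i; rewrite ?groupV.
Qed.

Lemma actA_mul u v a : u \in SS -> v \in SS -> actA i (u * v)%g a = actA i u (actA i v a).
Proof.
rewrite !inSS => /andP[u1 u2] /andP[v1 v2]; rewrite /actA /=.
by rewrite invMg iM ?iM ?groupV // !mulrA.
Qed.

Lemma actA1 a : actA i 1%g a = a.
Proof. by rewrite /actA /= invg1 i1 mul1r mulr1. Qed.

Lemma actAK u a : u \in SS -> actA i u^-1%g (actA i u a) = a.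
Proof. by move=> uS; rewrite -actA_mul ?groupV // mulVg actA1. Qed.

Lemma actAKV u a : u \in SS -> actA i u (actA i u^-1%g a) = a.
Proof. by move=> uS; rewrite -actA_mul ?groupV // mulgV actA1. Qed.

Lemma actA_inj u : u \in SS -> injective (actA i u).
Proof. by move=> uS a b h; rewrite -(actAK a uS) h actAK. Qed.

Lemma actAD u a b : actA i u (a + b) = actA i u a + actA i u b.
Proof. by rewrite /actA mulrDr mulrDl. Qed.
Lemma actAZ u (x : O) a : actA i u (x *: a) = x *: actA i u a.
Proof. by rewrite /actA -scalerAr -scalerAl. Qed.
Lemma actA_sum u (I : Type) (r : seq I) (P : pred I) (F : I -> A) :
  actA i u (\sum_(x <- r | P x) F x) = \sum_(x <- r | P x) actA i u (F x).
Proof. by rewrite /actA mulr_sumr mulr_suml. Qed.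
Lemma actA0 u : actA i u 0 = 0.
Proof. by rewrite /actA mulr0 mul0r. Qed.

Variables (Y : seq A) (hY : is_basis Y) (hinv : inv_basis S i Y).
Local Notation n := (size Y).
Definition eY (j : 'I_n) : A := Y`_j.
Lemma heY : basisN eY. Proof. exact: hY. Qed.
Local Notation cf := (coef heY).

Lemma inY u y : u \in SS -> y \in Y -> actA i u y \in Y.
Proof.
rewrite inSS => /andP[u1 u2] yY; rewrite /actA.
have [h1 _] := hinv u1; have [_ h2] := hinv (groupVr u2).
rewrite -h2; apply: map_f; rewrite -h1; exact: map_f.
Qed.

Lemma eY_inj : injective eY.
Proof.
move=> k l h; have := coef_e heY k k; rewrite h coef_e eqxx.
by case: eqP => // _ /eqP; rewrite eq_sym oner_eq0.
Qed.

Definition Lk (u : gT * gT) (k : 'I_n) : 'I_n := odflt k [pick l | eY l == actA i u (eY k)].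

Lemma LkE u k : u \in SS -> eY (Lk u k) = actA i u (eY k).
Proof.
move=> uS; rewrite /Lk; case: pickP => [l /eqP //|h].
have := inY uS (mem_nth 0 (ltn_ord k)).
move=> /(nthP 0) [m hm he]; have := h (Ordinal hm); by rewrite /eY /= he eqxx.
Qed.

Lemma Lk_inj u : u \in SS -> injective (Lk u).
Proof. by move=> uS k l h; apply: eY_inj; apply: (actA_inj uS); rewrite -!LkE // h. Qed.

Lemma LkM u v k : u \in SS -> v \in SS -> Lk (u * v)%g k = Lk u (Lk v k).
Proof. by move=> uS vS; apply: eY_inj; rewrite !LkE ?groupM // actA_mul. Qed.

Lemma Lk1 k : Lk 1%g k = k.
Proof. by apply: eY_inj; rewrite LkE ?group1 // actA1. Qed.

Lemma coef_act u c k : u \in SS -> cf (actA i u c) (Lk u k) = cf c k.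
Proof.
move=> uS; rewrite {1}(coefE heY c) actA_sum coef_sum.
rewrite (bigD1 k) //= actAZ coefZ -LkE // coef_e eqxx mulr1 big1 ?addr0 // => l lk.
rewrite actAZ coefZ -LkE // coef_e.
by case: eqP => [/(Lk_inj uS) /eqP|]; rewrite ?(negbTE lk) ?mulr0.
Qed.

End Act.

Section Delta.
Variables (gT : finGroupType).

Lemma Delta_group (P : {group gT}) (phi : gT -> gT) :
  {in P &, forall x y, phi (x * y)%g = (phi x * phi y)%g} -> group_set (Delta phi P).
Proof.
move=> hm; have p1 : phi 1%g = 1%g.
  have h := hm _ _ (group1 P) (group1 P); rewrite mulg1 in h.
  by have := congr1 (mulg (phi 1%g)^-1) h; rewrite mulKg mulVg => e; exact: esym e.
apply/group_setP; split; first by apply/imsetP; exists 1%g; rewrite ?group1 ?p1.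
move=> _ _ /imsetP[x xP ->] /imsetP[y yP ->]; apply/imsetP; exists (x * y)%g.
  exact: groupM.
by rewrite hm.
Qed.

Lemma card_Delta (P : {set gT}) phi : #|Delta phi P| = #|P|.
Proof. by apply: card_in_imset => x y _ _ [_ ->]. Qed.

Lemma Delta_sub (S P : {set gT}) phi : P \subset S -> (forall x, x \in P -> phi x \in S) ->
  Delta phi P \subset setX S S.
Proof.
move=> PS hphi; apply/subsetP => _ /imsetP[x xP ->].
by rewrite in_setX hphi //= (subsetP PS).
Qed.

Lemma repr_lcosets (U V : {group gT}) C : V \subset U -> C \in lcosets V U -> repr C \in U.
Proof.
move=> VU /lcosetsP [x xU ->].
have : repr (x *: V)%g \in (x *: V)%g by apply: mem_repr (lcoset_refl V x).
rewrite mem_lcoset => h.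
by rewrite -(mulKVg x (repr _)) groupM // (subsetP VU).
Qed.

End Delta.

Section Brauer.
Variables (O : idomainType) (O_local : is_local O) (A : algType O) (gT : finGroupType).
Variables (S : {group gT}) (i : gT -> A) (hi : interior S i).
Variables (Y : seq A) (hY : is_basis Y) (hinv : inv_basis S i Y).
Local Notation cf := (coef (heY hY)).
Local Notation Lk := (@Lk _ _ _ i Y).
Local Notation eY := (@eY _ _ Y).

Lemma coef_trA (U V : {group gT * gT}) c j0 : U \subset setX S S -> V \subset U ->
  (forall u, u \in U -> Lk u j0 = j0) ->
  cf (trA i U V c) j0 = #|U : V|%g%:R * cf c j0.
Proof.
move=> US VU hfix; rewrite /trA coef_sum.
rewrite (eq_bigr (fun _ => cf c j0)); last first.
  move=> C CL; have rU := repr_lcosets VU CL.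
  by rewrite -{1}(hfix _ rU) (coef_act hi hY hinv) // (subsetP US).
by rewrite sumr_const card_lcosets mulr_natl.
Qed.

Variables (p : nat) (k_char : residue_char O p).

Lemma index_mideal (U V : {group gT * gT}) : (p.-group U)%g -> V \proper U ->
  mideal (#|U : V|%g%:R : O).
Proof.
move=> pU VU.
have gt1 : (1 < #|U : V|%g)%N by rewrite indexg_gt1; case/properP: VU => _ [x xU xV]; apply/subsetPn; exists x.
have [k hk] := p_natP (pnat_dvd (dvdn_indexg U V) pU).
case: k hk => [|k] hk; first by rewrite hk in gt1.
by rewrite hk expnS natrM; apply: mideal_mulr; case: k_char.
Qed.

Lemma bq_nonzero (U : {group gT * gT}) j0 : U \subset setX S S -> (p.-group U)%g ->
  (forall u, u \in U -> Lk u j0 = j0) -> ~ in_bq_kernel i U (eY j0).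
Proof.
move=> US pU hfix [s [c [hs hc hb]]].
have := congr1 (fun a => cf a j0) hb; rewrite /= coef_e eqxx coefD !coef_sum.
move=> h1; apply: (@mideal1 O); rewrite (_ : 1 = true%:R) // h1; apply: (mideal_add O_local).
  rewrite big_seq; apply: (mideal_big O_local) => q qs /=; rewrite coefZ; apply: mideal_mulr.
  by case: (hs q qs).
apply: (mideal_big O_local) => V VU /=; rewrite coef_trA //; last by case/properP: VU.
by apply: mideal_mulr; apply: index_mideal.
Qed.

End Brauer.

Section Back.
Variables (O : idomainType) (O_local : is_local O) (k_closed : residue_alg_closed O).
Variables (p : nat) (k_char : residue_char O p).
Variables (A : algType O) (gT : finGroupType) (S : {group gT}) (pS : (p.-group S)%g).
Variables (i : gT -> A) (hi : interior S i).
Variables (Y : seq A) (hY : is_basis Y) (hinv : inv_basis S i Y).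
Variable hfree : forall s y, s \in S -> y \in Y -> (i s * y = y -> s = 1%g) /\ (y * i s = y -> s = 1%g).
Variable H : forall (P : {group gT}) (phi : gT -> gT), P \subset S -> FHom i P S phi ->
     exists a : A, is_unitA a /\ twisted_fixed i P phi a.

Local Notation n := (size Y).
Local Notation SS := (setX S S).
Local Notation Lk := (@Lk _ _ _ i Y).
Local Notation eY := (@eY _ _ Y).
Local Notation heY := (heY hY).
Local Notation cf := (coef heY).
Local Notation iMh := (iM hi).
Local Notation iVlh := (iVl hi).
Local Notation iVrh := (iVr hi).
Local Notation i1h := (i1 hi).
Local Notation Lk1h := (Lk1 hi hY hinv).
Local Notation eY_injh := (eY_inj hY).
Local Notation LkEh := (LkE hinv).
Local Notation LkMh := (LkM hi hY hinv).

Lemma free_l z s s' : z \in Y -> s \in S -> s' \in S -> i s * z = i s' * z -> s = s'.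
Proof.
move=> zY sS s'S h.
have : i (s'^-1 * s)%g * z = z by rewrite iMh ?groupV // -mulrA h mulrA iVlh // mul1r.
move=> /(hfree (groupM (groupVr s'S) sS) zY).1 e.
by rewrite -(mulKVg s' s) e mulg1.
Qed.

Lemma free_r z t t' : z \in Y -> t \in S -> t' \in S -> z * i t = z * i t' -> t = t'.
Proof.
move=> zY tS t'S h.
have : z * i (t * t'^-1)%g = z by rewrite iMh ?groupV // mulrA h -mulrA iVrh // mulr1.
move=> /(hfree (groupM tS (groupVr t'S)) zY).2 e.
by rewrite -(mulgKV t' t) e mul1g.
Qed.

Definition Pset (z : A) := [set t in S | [exists s in S, i s * z == z * i t]].
Definition phiz (z : A) (t : gT) := odflt 1%g [pick s in S | i s * z == z * i t].

Lemma phiz_spec z t : t \in Pset z -> phiz z t \in S /\ i (phiz z t) * z = z * i t.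
Proof.
rewrite inE => /andP[tS /existsP[s /andP[sS /eqP hs]]].
rewrite /phiz; case: pickP => [s' /andP[s'S /eqP h]|h] //=.
by move: (h s); rewrite sS hs eqxx.
Qed.

Lemma Pset_sub z : Pset z \subset S.
Proof. by apply/subsetP => t; rewrite inE => /andP[]. Qed.

Lemma Pset_group z : group_set (Pset z).
Proof.
apply/group_setP; split.
  by rewrite inE group1 /=; apply/existsP; exists 1%g; rewrite group1 i1h mul1r mulr1 eqxx.
move=> t1 t2; rewrite !inE => /andP[t1S /existsP[s1 /andP[s1S /eqP h1]]].
move=> /andP[t2S /existsP[s2 /andP[s2S /eqP h2]]].
rewrite groupM //; apply/existsP; exists (s1 * s2)%g; rewrite groupM //=.
rewrite iMh // iMh //; apply/eqP; by rewrite -mulrA h2 mulrA h1 -mulrA.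
Qed.

Definition Pg z := Group (Pset_group z).

Lemma phiz_hom z : z \in Y -> {in Pset z &, forall x y, phiz z (x * y)%g = (phiz z x * phiz z y)%g}.
Proof.
move=> zY t1 t2 h1 h2; have [s1S e1] := phiz_spec h1; have [s2S e2] := phiz_spec h2.
have h12 : (t1 * t2)%g \in Pset z by apply: (groupM (G := Pg z)).
have [sS e] := phiz_spec h12.
apply: (free_l zY) => //; first by rewrite groupM.
have t1S := subsetP (Pset_sub z) _ h1; have t2S := subsetP (Pset_sub z) _ h2.
by rewrite e (iMh s1S s2S) -mulrA e2 mulrA e1 -mulrA -(iMh t1S t2S).
Qed.

Lemma phiz_inj_hom z : z \in Y -> inj_hom (Pset z) S (phiz z).
Proof.
move=> zY; split; first exact: phiz_hom.
  move=> t1 t2 h1 h2 e; have [_ e1] := phiz_spec h1; have [_ e2] := phiz_spec h2.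
  apply: (free_r zY); rewrite ?(subsetP (Pset_sub z)) //.
  by rewrite -e1 -e2 e.
by move=> t h; case: (phiz_spec h).
Qed.

Lemma Delta_fix j u : u \in Delta (phiz (eY j)) (Pset (eY j)) -> Lk u j = j.
Proof.
move=> /imsetP[t tP ->]; have [sS e] := phiz_spec tP.
have tS : t \in S := subsetP (Pset_sub _) _ tP.
apply: eY_injh; rewrite LkEh; last by rewrite in_setX sS.
by rewrite /actA /= e -mulrA iVrh // mulr1.
Qed.

Lemma eY_in j : eY j \in Y.
Proof. exact: mem_nth. Qed.

Lemma FHom_z j : FHom i (Pg (eY j)) S (phiz (eY j)).
Proof.
split; first exact: phiz_inj_hom (eY_in j).
have DS : Delta (phiz (eY j)) (Pset (eY j)) \subset SS.
  by apply: Delta_sub; [apply: Pset_sub | move=> t /phiz_spec[]].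
exists (eY j); split.
  move=> u uD; rewrite -LkEh ?(subsetP DS) //.
  by rewrite Delta_fix.
pose Ug := Group (@Delta_group _ (Pg (eY j)) (phiz (eY j)) (phiz_hom (eY_in j))).
have pU : (p.-group Ug)%g.
  by rewrite /pgroup card_Delta; exact: (@pgroupS _ _ S (Pg (eY j)) (Pset_sub _) pS).
exact: (bq_nonzero O_local hi hY hinv k_char (U := Ug) DS pU (@Delta_fix j)).
Qed.

Definition ufun (j : 'I_n) : A :=
  epsilon (inhabits 0) (fun a => is_unitA a /\ twisted_fixed i (Pset (eY j)) (phiz (eY j)) a).

Lemma ufun_spec j : is_unitA (ufun j) /\ twisted_fixed i (Pset (eY j)) (phiz (eY j)) (ufun j).
Proof.
apply: (epsilon_spec (inhabits 0) (fun a => is_unitA a /\ twisted_fixed i (Pset (eY j)) (phiz (eY j)) a)).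
exact: (@H (Pg (eY j)) (phiz (eY j)) (Pset_sub _) (FHom_z j)).
Qed.

Lemma LkK v k : v \in SS -> Lk v (Lk v^-1%g k) = k.
Proof. by move=> vS; rewrite -LkMh ?groupV // mulgV Lk1h. Qed.
Lemma LkVK v k : v \in SS -> Lk v^-1%g (Lk v k) = k.
Proof. by move=> vS; rewrite -LkMh ?groupV // mulVg Lk1h. Qed.

Definition rk (k : 'I_n) : 'I_n := odflt k [pick l | [exists u in SS, Lk u l == k]].

Lemma rk_spec k : exists2 u, u \in SS & Lk u (rk k) = k.
Proof.
rewrite /rk; case: pickP => [l /existsP[u /andP[uS /eqP e]]|h] /=; first by exists u.
by move: (h k) => /existsP; case; exists 1%g; rewrite group1 Lk1h eqxx.
Qed.

Lemma rk_act v k : v \in SS -> rk (Lk v k) = rk k.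
Proof.
move=> vS; rewrite /rk (@eq_pick _ _ (fun l => [exists u in SS, Lk u l == k])).
  case: pickP => // h; move: (h k) => /existsP; case.
  by exists 1%g; rewrite group1 Lk1h eqxx.
move=> l; apply/existsP/existsP => [[u /andP[uS /eqP e]]|[u /andP[uS /eqP e]]].
  exists (v^-1 * u)%g; rewrite groupM ?groupV //= LkMh ?groupV //.
  by rewrite e LkVK.
by exists (v * u)%g; rewrite groupM //= LkMh // e.
Qed.

Definition gk (k : 'I_n) : gT * gT := odflt 1%g [pick u in SS | Lk u (rk k) == k].

Lemma gk_spec k : gk k \in SS /\ Lk (gk k) (rk k) = k.
Proof.
rewrite /gk; case: pickP => [u /andP[uS /eqP e]|h] //=.
have [u uS e] := rk_spec k; by move: (h u); rewrite uS e eqxx.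
Qed.

Definition w (k : 'I_n) : A := actA i (gk k) (ufun (rk k)).

Lemma w_welldef k v : v \in SS -> Lk v (rk k) = k -> w k = actA i v (ufun (rk k)).
Proof.
move=> vS e; have [uS eu] := gk_spec k.
set r := rk k; set u := gk k; set x := (v^-1 * u)%g.
have xS : x \in SS by rewrite groupM ?groupV.
have xr : Lk x r = r by rewrite LkMh ?groupV // eu -e LkVK.
have hx : actA i x (eY r) = eY r by rewrite -LkEh // xr.
have x1S : x.1 \in S by move: xS; rewrite inSS => /andP[].
have x2S : x.2 \in S by move: xS; rewrite inSS => /andP[].
have hx' : i x.1 * eY r = eY r * i x.2.
  by rewrite -{2}hx /actA -mulrA iVlh // mulr1.
have x2P : x.2 \in Pset (eY r).
  by rewrite inE x2S; apply/existsP; exists x.1; rewrite x1S hx' eqxx.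
have [phS eph] := phiz_spec x2P.
have ph : phiz (eY r) x.2 = x.1 by apply: (free_l (eY_in r)) => //; rewrite eph hx'.
have [_ tw] := ufun_spec r.
have fixa : actA i x (ufun r) = ufun r.
  by rewrite /actA -ph tw // -mulrA iVrh // mulr1.
rewrite /w -/u -/r.
have -> : u = (v * x)%g by rewrite /x mulKVg.
by rewrite (actA_mul hi) ?fixa.
Qed.

Lemma w_act k v : v \in SS -> w (Lk v k) = actA i v (w k).
Proof.
move=> vS; have [uS eu] := gk_spec k.
rewrite (@w_welldef (Lk v k) (v * gk k)%g) ?groupM ?rk_act //.
  by rewrite (actA_mul hi).
by rewrite LkMh // eu.
Qed.

Lemma w_unit k : is_unitA (w k).
Proof. have [uS _] := gk_spec k; apply: (actA_unit hi uS); exact: (ufun_spec _).1. Qed.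


Lemma actAB u a b : actA i u (a - b) = actA i u a - actA i u b.
Proof. by rewrite /actA mulrBr mulrBl. Qed.

Definition hl (l : O) k := eY k + l *: (w k - eY k).

Lemma actA_hl l v k : v \in SS -> actA i v (hl l k) = hl l (Lk v k).
Proof. by move=> vS; rewrite /hl actAD actAZ actAB w_act // LkEh. Qed.

Definition Yl l := [seq hl l k | k <- enum 'I_n].

Lemma Yl_inv l : inv_basis S i (Yl l).
Proof.
move=> s sS; split => x.
  pose v : gT * gT := (s, 1%g); have vS : v \in SS by rewrite inSS /= sS group1.
  have iv : forall z, i s * z = actA i v z by move=> z; rewrite /actA /= invg1 i1h mulr1.
  apply/mapP/mapP => [[z /mapP[k _ ->] ->]|[k _ ->]].
    by exists (Lk v k); rewrite ?mem_enum // iv actA_hl.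
  exists (hl l (Lk v^-1%g k)); first by apply: map_f; rewrite mem_enum.
  by rewrite iv actA_hl // LkK.
pose v : gT * gT := (1%g, s^-1%g); have vS : v \in SS by rewrite inSS /= groupV sS group1.
have iv : forall z, z * i s = actA i v z by move=> z; rewrite /actA /= invgK i1h mul1r.
apply/mapP/mapP => [[z /mapP[k _ ->] ->]|[k _ ->]].
  by exists (Lk v k); rewrite ?mem_enum // iv actA_hl.
exists (hl l (Lk v^-1%g k)); first by apply: map_f; rewrite mem_enum.
by rewrite iv actA_hl // LkK.
Qed.

Definition Wm : 'M[O]_n := \matrix_(j, k) cf (w j) k.

Lemma lin_expand (x1 x2 : A) (c1 c2 : 'I_n -> O) l :
  x1 = \sum_(k < n) c1 k *: eY k -> x2 = \sum_(k < n) c2 k *: eY k ->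
  x1 + l *: (x2 - x1) = \sum_(k < n) (c1 k + l * (c2 k - c1 k)) *: eY k.
Proof.
move=> -> ->; rewrite -sumrB scaler_sumr -big_split; apply: eq_bigr => k _.
by rewrite scalerDl -scalerBl scalerA.
Qed.

Lemma hl_expand l j : hl l j = \sum_(k < n) (1%:M + l *: (Wm - 1%:M)) j k *: eY k.
Proof.
have e1 : eY j = \sum_(k < n) (1%:M : 'M[O]_n) j k *: eY k by have := rep1 eY j; rewrite mul1r.
have e2 : w j = \sum_(k < n) Wm j k *: eY k.
  by rewrite {1}(coefE heY (w j)); apply: eq_bigr => k _; rewrite mxE.
by rewrite /hl (lin_expand l e1 e2); apply: eq_bigr => k _; rewrite !mxE.
Qed.

Definition q0 : {poly O} := \det (map_mx polyC 1%:M + 'X *: map_mx polyC (Wm - 1%:M)).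
Definition qj (j : 'I_n) : {poly O} :=
  \det (map_mx polyC (mat heY (eY j)) + 'X *: map_mx polyC (mat heY (w j) - mat heY (eY j))).

Lemma back_main : exists Y' : seq A,
  [/\ is_basis Y', inv_basis S i Y' & forall y, y \in Y' -> is_unitA y].
Proof.
have hpre : forall f, f \in q0 :: [seq qj j | j <- enum 'I_n] -> exists a, f.[a] \is a GRing.unit.
  move=> f; rewrite inE => /orP[/eqP->|/mapP[j _ ->]].
    by exists 0; rewrite /q0 pdet_eval scale0r addr0 det1 unitr1.
  exists 1; rewrite /qj pdet_eval scale1r addrC subrK; apply: (unit_rep heY); exact: w_unit.
have [l hl_] := choose_good O_local k_closed hpre.
exists (Yl l); split.
- apply: (is_basis_of (n := n)); first by rewrite size_map size_enum_ord.
  apply: (basisN_eq (e := hl l)).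
    by move=> j; rewrite /Yl (nth_map j) ?size_enum_ord // nth_ord_enum.
  apply: (basis_change heY (B := 1%:M + l *: (Wm - 1%:M))); first exact: hl_expand.
  by rewrite -pdet_eval; apply: hl_; rewrite mem_head.
- exact: Yl_inv.
move=> y /mapP[j _ ->].
apply: (rep_unit heY (M := mat heY (eY j) + l *: (mat heY (w j) - mat heY (eY j)))).
  exact: rep_lin (rep_mat heY _) (rep_mat heY _).
rewrite -pdet_eval; apply: hl_; rewrite inE; apply/orP; right.
by apply: map_f; rewrite mem_enum.
Qed.

End Back.

Section Forth.
Variables (O : idomainType) (A : algType O) (gT : finGroupType) (S : {group gT}).
Variables (i : gT -> A) (hi : interior S i).
Variables (Y : seq A) (hY : is_basis Y) (hinv : inv_basis S i Y).

Local Notation n := (size Y).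
Local Notation SS := (setX S S).
Local Notation Lk := (@Lk _ _ _ i Y).
Local Notation eY := (@eY _ _ Y).
Local Notation heY := (heY hY).
Local Notation cf := (coef heY).
Local Notation LkEh := (LkE hinv).
Local Notation LkMh := (LkM hi hY hinv).
Local Notation Lk1h := (Lk1 hi hY hinv).

Variables (U : {group gT * gT}) (US : U \subset SS).

Lemma inUS u : u \in U -> u \in SS. Proof. exact: (subsetP US). Qed.

Lemma LkVK' u k : u \in SS -> Lk u^-1%g (Lk u k) = k.
Proof. by move=> uS; rewrite -LkMh ?groupV // mulVg Lk1h. Qed.

Definition orb (k : 'I_n) : {set 'I_n} := [set Lk u k | u in U].
Definition stab (k : 'I_n) : {set gT * gT} := [set u in U | Lk u k == k].

Lemma stab_group k : group_set (stab k).
Proof.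
apply/group_setP; split; first by rewrite inE group1 Lk1h eqxx.
move=> u v; rewrite !inE => /andP[uU /eqP eu] /andP[vU /eqP ev].
by rewrite groupM // LkMh ?inUS // ev eu eqxx.
Qed.
Definition stabg k := Group (stab_group k).

Lemma stab_sub k : stabg k \subset U.
Proof. by apply/subsetP => u; rewrite inE => /andP[]. Qed.

Lemma orb_refl k : k \in orb k.
Proof. by apply/imsetP; exists 1%g; rewrite ?group1 ?Lk1h. Qed.

Lemma orb_sym k l : l \in orb k -> k \in orb l.
Proof.
move=> /imsetP[u uU ->]; apply/imsetP; exists u^-1%g; rewrite ?groupV //.
by rewrite LkVK' // inUS.
Qed.

Lemma orb_trans k l : l \in orb k -> orb l = orb k.
Proof.
move=> /imsetP[u uU ->]; apply/setP => m; apply/imsetP/imsetP => [[v vU ->]|[v vU ->]].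
  by exists (v * u)%g; rewrite ?groupM // LkMh ?inUS.
by exists (v * u^-1)%g; rewrite ?groupM ?groupV // LkMh ?groupV ?inUS // LkVK' // inUS.
Qed.

Lemma orbit_sum k : trA i U (stabg k) (eY k) = \sum_(l in orb k) eY l.
Proof.
have hU := stab_sub k.
rewrite /trA (eq_bigr (fun C => eY (Lk (repr C) k))); last first.
  by move=> C CL; rewrite LkEh // inUS // (repr_lcosets hU CL).
have inj : {in lcosets (stabg k) U &, injective (fun C => Lk (repr C) k)}.
  move=> C1 C2 h1 h2 e.
  have r1U := repr_lcosets hU h1; have r2U := repr_lcosets hU h2.
  case/lcosetsP: h1 => x1 x1U E1; case/lcosetsP: h2 => x2 x2U E2.
  have m1 : repr C1 \in (x1 *: stabg k)%g by rewrite -E1; apply: (@mem_repr _ _ x1); rewrite E1 lcoset_refl.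
  have m2 : repr C2 \in (x2 *: stabg k)%g by rewrite -E2; apply: (@mem_repr _ _ x2); rewrite E2 lcoset_refl.
  rewrite E1 E2 -(lcoset_eqP m1) -(lcoset_eqP m2); apply/lcoset_eqP.
  rewrite mem_lcoset inE groupM ?groupV //= LkMh ?groupV ?inUS // e.
  by rewrite LkVK' // inUS.
rewrite -(big_imset _ inj) /=; apply: eq_bigl => l.
apply/imsetP/imsetP => [[C CL ->]|[u uU ->]].
  by exists (repr C); rewrite // (repr_lcosets hU CL).
exists (u *: stabg k)%g; first by apply/lcosetsP; exists u.
have m : repr (u *: stabg k)%g \in (u *: stabg k)%g by apply: mem_repr (lcoset_refl _ _).
move: m; rewrite mem_lcoset inE => /andP[vU /eqP ev].
have uS := inUS uU.
by rewrite -{1}(mulKVg u (repr _)) LkMh ?inUS // ev.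
Qed.

Lemma coef_const (a : A) u k : fixedU i U a -> u \in U -> cf a (Lk u k) = cf a k.
Proof. by move=> fa uU; rewrite -{1}(fa u uU) (coef_act hi hY hinv) // inUS. Qed.

Definition repf (l : 'I_n) : 'I_n := [arg min_(m < l in orb l) (m : nat)].
Definition isrep (k : 'I_n) := [forall l in orb k, (k <= l)%N].

Lemma repf_spec l : repf l \in orb l /\ forall m, m \in orb l -> (repf l <= m)%N.
Proof.
rewrite /repf; case: arg_minnP; first exact: orb_refl.
by move=> m mo hm; split => // m' /hm.
Qed.

Lemma isrep_repf l : isrep (repf l).
Proof.
have [h1 h2] := repf_spec l; apply/forallP => m; apply/implyP.
by rewrite (orb_trans h1) => /h2.
Qed.

Lemma repf_eq k l : isrep k -> (repf l == k) = (l \in orb k).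
Proof.
move=> rk; have [h1 h2] := repf_spec l.
apply/eqP/idP => [<-|lk]; first exact: orb_sym.
have e := orb_trans lk; apply/val_inj/eqP; rewrite eqn_leq; apply/andP; split.
  by apply: h2; rewrite e orb_refl.
by move/forallP: rk => /(_ (repf l)) /implyP; apply; rewrite -e.
Qed.

Hypothesis nofix : forall k, ~~ [forall u in U, Lk u k == k].

Lemma stab_proper k : stabg k \proper U.
Proof.
rewrite properEneq stab_sub andbT; apply/eqP => e.
move/negP: (nofix k); apply; apply/forall_inP => u uU.
by move: uU; rewrite -e inE => /andP[].
Qed.

Lemma decomp (a : A) : fixedU i U a -> in_bq_kernel i U a.
Proof.
move=> fa.
pose c := fun V : {group gT * gT} =>
  \sum_(k | isrep k && (stabg k == V)) cf a k *: eY k.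
exists [::], c; split => //.
- move=> V VU u uV; rewrite /c actA_sum; apply: eq_bigr => k /andP[_ /eqP e].
  have uU : u \in U by case/properP: VU => /subsetP VU' _; apply: VU'.
  rewrite actAZ -LkEh; last exact: inUS.
  by move: uV; rewrite -e inE => /andP[_ /eqP ->].
rewrite big_nil add0r.
have trA_lin : forall V (F : 'I_n -> A) (P : pred 'I_n),
    trA i U V (\sum_(k | P k) F k) = \sum_(k | P k) trA i U V (F k).
  move=> V F P; rewrite /trA; under eq_bigr do rewrite actA_sum.
  exact: exchange_big.
have trZ : forall V x b, trA i U V (x *: b) = x *: trA i U V b.
  by move=> V x b; rewrite /trA scaler_sumr; apply: eq_bigr => C _; rewrite actAZ.
rewrite /c; under eq_bigr do rewrite trA_lin.
rewrite (exchange_big_dep isrep) /=; last by move=> V k _ /andP[].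
rewrite (eq_bigr (fun k => cf a k *: trA i U (stabg k) (eY k))); last first.
  move=> k rk; rewrite (big_pred1 (stabg k)) ?trZ // => V /=.
  by rewrite rk /= eq_sym; case: eqP => [->|]; rewrite ?stab_proper ?andbF.
under eq_bigr do rewrite orbit_sum scaler_sumr.
rewrite {1}(coefE heY a) (partition_big repf isrep) /=; last by move=> l _; apply: isrep_repf.
apply: eq_bigr => k rk; apply: eq_big => [l|l]; first by rewrite repf_eq.
rewrite repf_eq // => /imsetP[u uU ->]; by rewrite coef_const.
Qed.

End Forth.

Theorem proposition4p7 (O : idomainType) (p : nat)
  (O_local : is_local O) (O_noeth : noetherian O) (O_complete : m_complete O)
  (k_char : residue_char O p) (k_closed : residue_alg_closed O)
  (gT : finGroupType) (S : {group gT}) (pS : (p.-group S)%g)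
  (A : algType O) (i : gT -> A) (i_int : interior S i) (A_bifree : bifree S i) :
  (exists Y : seq A, [/\ is_basis Y, inv_basis S i Y & forall y, y \in Y -> is_unitA y])
  <->
  (forall (P : {group gT}) (phi : gT -> gT), P \subset S -> FHom i P S phi ->
     exists a : A, is_unitA a /\ twisted_fixed i P phi a).
Proof.
split; last first.
  move=> H; have [Y [hY hinv hfree]] := A_bifree.
  exact: (back_main O_local k_closed k_char pS i_int hY hinv hfree H).
move=> [Y [hY hinv hU]] P phi PS [[hhom hinj hmap] hbr].
pose U := Group (@Delta_group _ P phi hhom).
have US : U \subset setX S S by apply: Delta_sub.
case: (boolP [exists k, [forall u in U, @Lk _ _ _ i Y u k == k]]) => [/existsP[k /forall_inP hk]|hnf].
  exists (@eY _ _ Y k); split; first by apply: hU; apply: mem_nth.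
  move=> x xP.
  have uU : (phi x, x) \in U by apply/imsetP; exists x.
  have uS : (phi x, x) \in setX S S by apply: (subsetP US).
  have := LkE hinv k uS; rewrite (eqP (hk _ uU)) /actA /= => e.
  have xS : x \in S by apply: (subsetP PS).
  by rewrite [in RHS]e -mulrA (iVl i_int xS) mulr1.
exfalso; case: hbr => a [fa nk]; apply: nk.
apply: (decomp i_int hY hinv (U := U) US) => // k.
by move/existsPn: hnf; apply.
Qed.
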